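(* Let $D\subset\mathbb N^n$ be finite and not contained in any coordinate hyperplane, $p$ a prime and $r\ge1$. Let $(u_{\mathbf d})_{\mathbf d\in D}$ be nonnegative integers such that $\sum_{\mathbf d}u_{\mathbf d}\mathbf d\equiv0\pmod{p^r-1}$ and $\sum_{\mathbf d}u_{\mathbf d}\mathbf d$ has all coordinates positive. Then $\sum_{\mathbf d}s_p(u_{\mathbf d})\ge s_{D,p}(r)$.
   Context: $s_p(u)$ is the sum of the base-$p$ digits of $u$. $E_{D,p}(r)$ is the set of $U=(u_{\mathbf d})\in\{0,\dots,p^r-1\}^D$ with $\sum u_{\mathbf d}\mathbf d\equiv0\pmod{p^r-1}$ (coordinatewise) and all coordinates of $\sum u_{\mathbf d}\mathbf d$ positive, and $s_{D,p}(r)=\min_{U\in E_{D,p}(r)}\sum_{\mathbf d}s_p(u_{\mathbf d})$. *)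

(* Defs.v *)
From mathcomp Require Import all_boot all_order.
Unset Printing Implicit Defensive.

(* Base-p digit sum: the k-th base-p digit of u is (u %/ p^k) %% p; for p >= 2
   all digits of index k > u vanish, so summing k = 0..u suffices. *)
Definition s_p (p u : nat) : nat := \sum_(k < u.+1) (u %/ p ^ k) %% p.

(* D is a finite subset of N^n, given as a duplicate-free list of n-tuples.
   Coordinate j of  sum_{d in D} u_d d , where u is indexed by positions in D. *)
Definition lincomb n (D : seq (n.-tuple nat)) (u : 'I_(size D) -> nat) (j : 'I_n) : nat :=
  \sum_(i < size D) u i * tnth (nth [tuple of nseq n 0] D i) j.

Definition inE n (D : seq (n.-tuple nat)) (p r : nat) (U : {ffun 'I_(size D) -> 'I_(p ^ r)}) : bool :=
  [forall j : 'I_n, ((p ^ r).-1 %| lincomb n D (fun i => nat_of_ord (U i)) j)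
                    && (0 < lincomb n D (fun i => nat_of_ord (U i)) j)].

Definition weight n (D : seq (n.-tuple nat)) (p r : nat) (U : {ffun 'I_(size D) -> 'I_(p ^ r)}) : nat :=
  \sum_(i < size D) s_p p (U i).

(* s_{D,p}(r) = min over E_{D,p}(r) of the weight.  The neutral element of the
   minimum is the sum of all weights (>= each of them), so when E is nonempty
   this is exactly the minimum. *)
Definition s_Dp n (D : seq (n.-tuple nat)) (p r : nat) : nat :=
  \big[minn / \sum_(U | inE n D p r U) weight n D p r U]_(U | inE n D p r U) weight n D p r U.

(* Main.v *)
Require Import Defs.
From mathcomp Require Import all_boot all_order.
From mathcomp Require Import zify.

Definition dsum (p m u : nat) := \sum_(k < m) (u %/ p ^ k) %% p.

Lemma dsumS p m u : dsum p m.+1 u = u %% p + dsum p m (u %/ p).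
Proof.
rewrite /dsum big_ord_recl /= expn0 divn1; congr (_ + _).
by apply: eq_bigr => i _; rewrite /bump /= add1n expnS divnMA.
Qed.

Lemma dsum0 p m : dsum p m 0 = 0.
Proof. by rewrite /dsum big1 // => i _; rewrite div0n mod0n. Qed.

Lemma dsum1_aux m u : dsum 1 m u = 0.
Proof. by rewrite /dsum big1 // => i _; rewrite modn1. Qed.

Lemma dsum1 p m : dsum p m 1 <= 1.
Proof.
case: m => [|m]; first by rewrite /dsum big_ord0.
rewrite dsumS.
case: p => [|[|p]].
- by rewrite divn0 modn0 dsum0.
- by rewrite divn1 modn1 add0n; rewrite dsum1_aux.
- by rewrite modn_small // divn_small // dsum0.
Qed.

Lemma dsum_stable p m m' u : 1 < p -> u < p ^ m -> m <= m' -> dsum p m' u = dsum p m u.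
Proof.
move=> hp; elim: m m' u => [|m IH] m' u.
  by rewrite expn0 ltnS leqn0 => /eqP -> _; rewrite !dsum0.
case: m' => [//|m'] hu hm; rewrite !dsumS IH //.
by rewrite ltn_divLR ?(ltnW hp) // -expnSr.
Qed.

Lemma spE p N u : 1 < p -> u < p ^ N -> s_p p u = dsum p N u.
Proof.
move=> hp hu.
have h1 : u < p ^ u.+1 by apply: leq_trans (ltn_expl u hp) _; rewrite leq_exp2l //.
change (s_p p u) with (dsum p u.+1 u).
case: (leqP N u.+1) => h.
  by rewrite (@dsum_stable p N u.+1 u hp hu h).
by rewrite (@dsum_stable p u.+1 N u hp h1 (ltnW h)).
Qed.

Lemma dsum_sub p m a b : 1 < p -> a + b < p ^ m ->
  dsum p m (a + b) <= dsum p m a + dsum p m b.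
Proof.
move=> hp; elim: m a b => [|m IH] a b.
  by rewrite /dsum !big_ord0.
move=> hab.
have hp0 : 0 < p by apply: ltnW.
have hq : (a + b) %/ p < p ^ m by rewrite ltn_divLR // -expnSr.
rewrite !dsumS.
have hD := divnD a b hp0; have hM := modnD a b hp0.
set c := (p <= a %% p + b %% p) in hD hM.
have h1 : dsum p m ((a + b) %/ p) <= dsum p m (a %/ p + b %/ p) + c.
  rewrite hD; apply: leq_trans (IH _ _ _) _; first by rewrite -hD.
  rewrite leq_add2l; case: (c) => /=; [exact: dsum1 | by rewrite dsum0].
have h2 : dsum p m (a %/ p + b %/ p) <= dsum p m (a %/ p) + dsum p m (b %/ p).
  apply: IH; apply: leq_ltn_trans hq; rewrite hD; exact: leq_addr.
have h3 : (a + b) %% p + c <= a %% p + b %% p.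
  rewrite hM /c; case: leqP => h //=; rewrite ?subn0 ?addn0 //. lia.
lia.
Qed.

Lemma dsum_cat p r m a b : 1 < p -> b < p ^ r ->
  dsum p (r + m) (a * p ^ r + b) = dsum p m a + dsum p r b.
Proof.
move=> hp; elim: r b => [|r IH] b.
  by rewrite expn0 ltnS leqn0 => /eqP ->; rewrite muln1 addn0 dsum0 addn0.
move=> hb; have hp0 : 0 < p by apply: ltnW.
rewrite addSn !dsumS.
have -> : a * p ^ r.+1 + b = (a * p ^ r + b %/ p) * p + b %% p.
  by rewrite {1}(divn_eq b p) expnSr mulnA mulnDl addnA.
have hm : ((a * p ^ r + b %/ p) * p + b %% p) %% p = b %% p.
  by rewrite modnMDl modn_mod.
have hd : ((a * p ^ r + b %/ p) * p + b %% p) %/ p = a * p ^ r + b %/ p.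
  by rewrite divnMDl // (divn_small (ltn_pmod b hp0)) addn0.
rewrite hm hd IH; first lia.
by rewrite ltn_divLR // -expnSr.
Qed.

Fixpoint red (p r k u : nat) : nat :=
  match k with
  | 0 => u
  | k'.+1 => if u < p ^ r then u else red p r k' (u %/ p ^ r + u %% p ^ r)
  end.

Lemma step p r u : 1 < p -> 1 <= r -> p ^ r <= u ->
  [/\ u %/ p ^ r + u %% p ^ r < u, s_p p (u %/ p ^ r + u %% p ^ r) <= s_p p u,
      0 < u %/ p ^ r + u %% p ^ r & u %/ p ^ r + u %% p ^ r = u %[mod (p ^ r).-1]].
Proof.
move=> hp hr hu.
have hpr : 1 < p ^ r.
  apply: (leq_trans hp). rewrite -{1}(expn1 p). rewrite leq_exp2l //.
have hpr0 : 0 < p ^ r by apply: ltnW.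
have hu' := divn_eq u (p ^ r).
have ha : 0 < u %/ p ^ r by rewrite divn_gt0.
set a := u %/ p ^ r in hu' ha *; set b := u %% p ^ r in hu' *.
set v := a + b.
have hb : b < p ^ r by rewrite ltn_mod.
have hap : a * 2 <= a * p ^ r by rewrite leq_mul2l hpr orbT.
split.
- rewrite /v; lia.
- have hu1 : u < p ^ u by apply: ltn_expl.
  have ha1 : a < p ^ u by apply: leq_ltn_trans hu1; rewrite hu'; lia.
  have huN : u < p ^ (r + u) by apply: leq_trans hu1 _; rewrite leq_exp2l //; lia.
  have hvu : v <= u by rewrite /v; lia.
  rewrite (@spE p (r + u) u hp huN) [X in dsum _ _ X]hu' dsum_cat //.
  rewrite (@spE p (r + u) v hp); last by apply: leq_ltn_trans huN.
  apply: leq_trans (@dsum_sub p (r + u) a b hp _) _; first by apply: leq_ltn_trans huN.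
  rewrite (@dsum_stable p u (r + u) a hp ha1); last by lia.
  rewrite (@dsum_stable p r (r + u) b hp hb); last by lia.
  by [].
- rewrite /v; lia.
- have e : a * p ^ r + b = a * (p ^ r).-1 + v.
    rewrite /v; move: hpr0; case: (p ^ r) => // k _ /=; lia.
  by rewrite [in RHS]hu' e modnMDl.
Qed.

Lemma red_spec p r k u : 1 < p -> 1 <= r -> u <= k ->
  [/\ red p r k u < p ^ r, s_p p (red p r k u) <= s_p p u,
      (0 < red p r k u) = (0 < u) & red p r k u = u %[mod (p ^ r).-1]].
Proof.
move=> hp hr; elim: k u => [|k IH] u hk /=.
  move: hk; rewrite leqn0 => /eqP ->; split => //; rewrite expn_gt0; lia.
case: (ltnP u (p ^ r)) => h; first by split.
have [h1 h2 h3 h4] := @step p r u hp hr h.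
have [g1 g2 g3 g4] := IH _ (leq_trans h1 hk).
split => //.
- exact: leq_trans g2 h2.
- rewrite g3 h3; lia.
- by rewrite g4 h4.
Qed.

Lemma bigmin_le (T : eqType) (s : seq T) (P : pred T) (F : T -> nat) x j :
  j \in s -> P j -> \big[minn/x]_(i <- s | P i) F i <= F j.
Proof.
elim: s => // a s IH; rewrite in_cons big_cons => /orP [/eqP -> Pj | js Pj].
  by rewrite Pj geq_minl.
case: (P a); last exact: IH.
exact: leq_trans (geq_minr _ _) (IH js Pj).
Qed.

Lemma Rlt p r v : 1 < p -> 1 <= r -> red p r v v < p ^ r.
Proof. by move=> hp hr; case: (@red_spec p r v v hp hr (leqnn v)). Qed.

Theorem lemma2p4 (n : nat) (D : seq (n.-tuple nat)) (p r : nat)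
  (uD : uniq D)
  (hD : forall j : 'I_n, exists2 d, d \in D & tnth d j != 0)
  (hp : prime p) (hr : 1 <= r)
  (u : n.-tuple nat -> nat)
  (hdiv : forall j : 'I_n, (p ^ r).-1 %| \sum_(d <- D) u d * tnth d j)
  (hpos : forall j : 'I_n, 0 < \sum_(d <- D) u d * tnth d j) :
  s_Dp n D p r <= \sum_(d <- D) s_p p (u d).
Proof.
have hp1 : 1 < p by apply: prime_gt1.
set x0 := [tuple of nseq n 0].
have conv : forall F : n.-tuple nat -> nat,
    \sum_(d <- D) F d = \sum_(i < size D) F (nth x0 D i).
  by move=> F; rewrite (big_nth x0) big_mkord.
set R := fun v => red p r v v.
have spec := fun v => @red_spec p r v v hp1 hr (leqnn v).
pose U : {ffun 'I_(size D) -> 'I_(p ^ r)} :=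
  [ffun i : 'I_(size D) => Ordinal (@Rlt p r (u (nth x0 D i)) hp1 hr)].
have UE : forall i : 'I_(size D), nat_of_ord (U i) = R (u (nth x0 D i)) by move=> i; rewrite ffunE.
have hU : Defs.inE n D p r U.
  apply/forallP => j; apply/andP; split.
  - rewrite /lincomb /dvdn; under eq_bigr => i _ do rewrite UE.
    have := hdiv j; rewrite conv /dvdn -modn_summ => H.
    rewrite -modn_summ (eq_bigr (fun i : 'I_(size D) => u (nth x0 D i) * tnth (nth x0 D i) j %% (p ^ r).-1)); first by rewrite modn_summ.
    move=> i _.
    case: (spec (u (nth x0 D i))) => _ _ _ e.
    by rewrite /R -modnMml e modnMml ?modn_mod.
  - rewrite /lincomb; under eq_bigr => i _ do rewrite UE.
    have := hpos j; rewrite conv !lt0n !sum_nat_eq0.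
    congr (~~ _ = true); apply: eq_forallb => i; rewrite !muln_eq0.
    case: (spec (u (nth x0 D i))) => _ _ e _.
    by rewrite -[R _ == 0]negbK -lt0n e lt0n negbK.
apply: (@leq_trans (weight n D p r U)).
  rewrite /s_Dp; apply: bigmin_le; [exact: mem_index_enum | exact: hU].
rewrite /weight conv; apply: leq_sum => i _; rewrite UE.
by case: (spec (u (nth x0 D i))).
Qed.
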